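(* Let $\Lambda\in\mathcal H_I$ and let $W$ be a nonempty class of capacities on $(\Omega,\mathcal F)$. Define $\overline w(A)=\sup_{w\in W}w(A)$ and $\underline w(A)=\inf_{w\in W}w(A)$ for $A\in\mathcal F$ (these are capacities). Then for all $X\in\mathcal X$, $$\sup_{w\in W}\Lambda\mathrm{VaR}^{w}(X)=\Lambda\mathrm{VaR}^{\overline w}(X)\quad\text{and}\quad \inf_{w\in W}\Lambda\mathrm{VaR}^{+,w}(X)=\Lambda\mathrm{VaR}^{+,\underline w}(X).$$ In particular, for a nonempty class $\mathcal P$ of probability measures on $(\Omega,\mathcal F)$, $\sup_{\mathbb Q\in\mathcal P}\Lambda\mathrm{VaR}^{\mathbb Q}=\Lambda\mathrm{VaR}^{\overline{\mathbb Q}}$ and $\inf_{\mathbb Q\in\mathcal P}\Lambda\mathrm{VaR}^{+,\mathbb Q}=\Lambda\mathrm{VaR}^{+,\underline{\mathbb Q}}$ with $\overline{\mathbb Q}=\sup_{\mathbb Q\in\mathcal P}\mathbb Q$, $\underline{\mathbb Q}=\inf_{\mathbb Q\in\mathcal P}\mathbb Q$.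
   Context: Let $(\Omega,\mathcal F)$ be a measurable space and $\mathcal X$ a set of real-valued random variables on it containing all bounded ones. A map $w:\mathcal F\to[0,1]$ is a capacity if $w(\emptyset)=0$, $w(\Omega)=1$ and $A\subseteq B$ implies $w(A)\le w(B)$. For $\Lambda:\mathbb R\to[0,1]$ and a capacity $w$: $\Lambda\mathrm{VaR}^w(X)=\inf\{x\in\mathbb R: w(X>x)\le\Lambda(x)\}$, $\Lambda\mathrm{VaR}^{+,w}(X)=\sup\{x\in\mathbb R: w(X>x)\ge\Lambda(x)\}$, with $\inf\emptyset=\infty$, $\sup\emptyset=-\infty$. $\mathcal H_I$ is the set of all (non-strictly) increasing functions $\Lambda:\mathbb R\to(0,1)$. *)

(* Defs.v *)
From HB Require Import structures.
From mathcomp Require Import all_boot all_order all_algebra.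
From mathcomp Require Import all_classical all_reals all_analysis.
Set Implicit Arguments. Unset Strict Implicit. Unset Printing Implicit Defensive.
Import Order.TTheory GRing.Theory Num.Theory.
Local Open Scope classical_set_scope.
Local Open Scope ring_scope.

Definition capacity (d : measure_display) (T : measurableType d) (R : realType)
  (w : set T -> R) : Prop :=
  [/\ w set0 = 0, w setT = 1,
      (forall A, measurable A -> 0 <= w A <= 1) &
      (forall A B, measurable A -> measurable B -> A `<=` B -> w A <= w B)].

Definition LVaR (d : measure_display) (T : measurableType d) (R : realType)
  (Lam : R -> R) (w : set T -> R) (X : T -> R) : \bar R :=
  ereal_inf [set x%:E | x in [set x : R | w [set t | x < X t] <= Lam x]].

Definition LVaRp (d : measure_display) (T : measurableType d) (R : realType)
  (Lam : R -> R) (w : set T -> R) (X : T -> R) : \bar R :=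
  ereal_sup [set x%:E | x in [set x : R | Lam x <= w [set t | x < X t]]].

Definition wsup (T : Type) (R : realType) (W : set (set T -> R)) : set T -> R :=
  fun A => sup [set w A | w in W].
Definition winf (T : Type) (R : realType) (W : set (set T -> R)) : set T -> R :=
  fun A => inf [set w A | w in W].

Definition in_HI (R : realType) (Lam : R -> R) : Prop :=
  (forall x y, x <= y -> Lam x <= Lam y) /\ (forall x, 0 < Lam x < 1).

(* Main.v *)
Require Import Defs.
From HB Require Import structures.
From mathcomp Require Import all_boot all_order all_algebra.
From mathcomp Require Import all_classical all_reals all_analysis.
Import Order.TTheory GRing.Theory Num.Theory.
Local Open Scope classical_set_scope.
Local Open Scope ring_scope.

Lemma inf_bigcap (R : realType) (I : Type) (J : set I) (F : I -> set R) :
  (forall i, J i -> forall x y, x <= y -> F i x -> F i y) ->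
  ereal_inf (EFin @` [set x | forall i, J i -> F i x])
  = ereal_sup [set ereal_inf (EFin @` F i) | i in J].
Proof.
move=> HF; apply/eqP; rewrite eq_le; apply/andP; split; last first.
  apply: ge_ereal_sup => _ [i Ji <-]; apply: ereal_inf_le_tmp => _ [x Fx <-].
  by exists x => //; exact: Fx i Ji.
set s := ereal_sup _.
have key : forall y : R, (s < y%:E)%E -> forall i, J i -> F i y.
  move=> y sy i Ji.
  have : (ereal_inf (EFin @` F i) < y%:E)%E.
    by apply: le_lt_trans sy; apply: ereal_sup_ubound; exists i.
  case/ereal_inf_lt => _ [x Fx <-]; rewrite lte_fin => xy.
  exact: (HF i Ji x y (ltW xy) Fx).
case E: s => [r| |]; last 2 first.
- exact: leey.
- have HT : forall y : R, (ereal_inf (EFin @` [set x | forall i, J i -> F i x]) <= y%:E)%E.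
    by move=> y; apply: ereal_inf_lbound; exists y => //; apply: key; rewrite E ltNye.
  move: HT; case: (ereal_inf _) => [r| |] HT //.
  + by have := HT (r - 1); rewrite lee_fin lerBrDr gerDl ler10.
  + by have := HT 0.
apply/lee_addgt0Pr => e e0; apply: ereal_inf_lbound; exists (r + e) => //.
apply: key; rewrite E lte_fin ltrDl //.
Qed.

Lemma sup_bigcap (R : realType) (I : Type) (J : set I) (F : I -> set R) :
  (forall i, J i -> forall x y, x <= y -> F i y -> F i x) ->
  ereal_sup (EFin @` [set x | forall i, J i -> F i x])
  = ereal_inf [set ereal_sup (EFin @` F i) | i in J].
Proof.
move=> HF; apply/eqP; rewrite eq_le; apply/andP; split.
  apply: le_ereal_inf_tmp => _ [i Ji <-]; apply: ereal_sup_le => _ [x Fx <-].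
  by exists x => //; exact: Fx i Ji.
set s := ereal_inf _.
have key : forall y : R, (y%:E < s)%E -> forall i, J i -> F i y.
  move=> y sy i Ji.
  have : (y%:E < ereal_sup (EFin @` F i))%E.
    by apply: lt_le_trans sy _; apply: ereal_inf_lbound; exists i.
  case/ereal_sup_gt => _ [x Fx <-]; rewrite lte_fin => xy.
  exact: (HF i Ji y x (ltW xy) Fx).
case E: s => [r| |]; last 2 first.
- have HT : forall y : R, (y%:E <= ereal_sup (EFin @` [set x | forall i, J i -> F i x]))%E.
    by move=> y; apply: ereal_sup_ubound; exists y => //; apply: key; rewrite E ltey.
  move: HT; case: (ereal_sup _) => [r| |] HT //.
  + by have := HT (r + 1); rewrite lee_fin gerDl ler10.
  + by have := HT 0.
- exact: leNye.
apply/lee_subgt0Pr => e e0; apply: ereal_sup_ubound; exists (r - e) => //.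
apply: key; rewrite E lte_fin ltrBlDr ltrDl //.
Qed.

Lemma part1 (d : measure_display) (T : measurableType d) (R : realType)
  (Lam : R -> R) : in_HI Lam ->
  (forall (W : set (set T -> R)), W !=set0 -> (forall w, W w -> capacity w) ->
     forall X : T -> R, measurable_fun setT X ->
       ereal_sup [set LVaR Lam w X | w in W] = LVaR Lam (wsup W) X /\
       ereal_inf [set LVaRp Lam w X | w in W] = LVaRp Lam (winf W) X).
Proof.
move=> [Lmono _] W W0 Wcap X mX.
have hA : forall x : R, measurable [set t | x < X t].
  move=> x; have := mX measurableT _ (measurable_itv `]x, +oo[).
  by rewrite setTI; congr measurable; apply/seteqP; split => t /=;
    rewrite in_itv /= andbT.
have sub : forall x y : R, x <= y -> [set t | y < X t] `<=` [set t | x < X t].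
  by move=> x y xy t /= /(le_lt_trans xy).
have img0 : forall B, [set w B | w in W] !=set0.
  by move=> B; case: W0 => w Ww; exists (w B), w.
split.
- rewrite /LVaR -inf_bigcap; last first.
    move=> w Ww x y xy /= h; case: (Wcap w Ww) => _ _ _ mon.
    exact: le_trans (mon _ _ (hA y) (hA x) (sub x y xy)) (le_trans h (Lmono _ _ xy)).
  congr ereal_inf; congr image; apply/seteqP; split => x /=.
    move=> h; rewrite /wsup; apply: ge_sup => // _ [w Ww <-]; exact: h.
  move=> h w Ww; apply: le_trans h; rewrite /wsup; apply: sup_upper_bound.
    split => //; exists 1 => _ [v Wv <-]; case: (Wcap v Wv) => _ _ b _.
    by case/andP: (b _ (hA x)).
  by exists w.
- rewrite /LVaRp -sup_bigcap; last first.
    move=> w Ww x y xy /= h; case: (Wcap w Ww) => _ _ _ mon.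
    exact: le_trans (Lmono _ _ xy) (le_trans h (mon _ _ (hA y) (hA x) (sub x y xy))).
  congr ereal_sup; congr image; apply/seteqP; split => x /=.
    move=> h; rewrite /winf; apply: lb_le_inf => // _ [w Ww <-]; exact: h.
  move=> h w Ww; apply: le_trans h _; rewrite /winf; apply: ge_inf.
    exists 0 => _ [v Wv <-]; case: (Wcap v Wv) => _ _ b _.
    by case/andP: (b _ (hA x)).
  by exists w.
Qed.

Theorem mainTheorem2 (d : measure_display) (T : measurableType d) (R : realType)
  (Lam : R -> R) : in_HI Lam ->
  (forall (W : set (set T -> R)), W !=set0 -> (forall w, W w -> capacity w) ->
     forall X : T -> R, measurable_fun setT X ->
       ereal_sup [set LVaR Lam w X | w in W] = LVaR Lam (wsup W) X /\
       ereal_inf [set LVaRp Lam w X | w in W] = LVaRp Lam (winf W) X) /\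
  (forall (P : set (probability T R)), P !=set0 ->
     forall X : T -> R, measurable_fun setT X ->
       let W := [set (fun A => fine (Q A)) | Q in P] in
       ereal_sup [set LVaR Lam (fun A => fine (Q A)) X | Q in P]
         = LVaR Lam (wsup W) X /\
       ereal_inf [set LVaRp Lam (fun A => fine (Q A)) X | Q in P]
         = LVaRp Lam (winf W) X).
Proof.
move=> HL; split; first exact: part1.
move=> P P0 X mX W.
have W0 : W !=set0 by case: P0 => Q PQ; exists (fun A => fine (Q A)), Q.
have Wcap : forall w, W w -> capacity w.
  move=> _ [Q PQ <-]; split => /=.
  - by rewrite measure0.
  - by rewrite probability_setT.
  - move=> A mA; apply/andP; split; first exact/fine_ge0/measure_ge0.
    by rewrite -lee_fin fineK ?fin_num_measure// probability_le1.
  - move=> A B mA mB AB; rewrite -lee_fin !fineK ?fin_num_measure//.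
    by apply: le_measure => //; rewrite inE.
have [h1 h2] := @part1 d T R Lam HL W W0 Wcap X mX.
split.
- rewrite -h1; congr ereal_sup; apply/seteqP; split => _ [Q PQ <-].
    by exists (fun A => fine (Q A)) => //; exists Q.
  by case: PQ => Q' PQ' <-; exists Q'.
- rewrite -h2; congr ereal_inf; apply/seteqP; split => _ [Q PQ <-].
    by exists (fun A => fine (Q A)) => //; exists Q.
  by case: PQ => Q' PQ' <-; exists Q'.
Qed.
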